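(* Consider the (1+1) EA maximizing $\mathrm{LeadingOnes}$ on $\{0,1\}^n$, and let $V_t$ be the $\mathrm{LeadingOnes}$ value of its current search point after $t$ iterations. Then for all $t\le\frac{e-1}{2}n^2-n^{3/2}\log n$, \[ \mathbb{E}[V_t]\ \ge\ \frac{2t}{en}-O(1). \]
   Context: $\mathrm{LeadingOnes}(x)=\sum_{i=1}^n\prod_{j=1}^i x_j$ for $x\in\{0,1\}^n$. The (1+1) EA maximizing $f\colon\{0,1\}^n\to\mathbb{R}$: choose $x\in\{0,1\}^n$ uniformly at random; then repeatedly (one iteration) create $y$ from $x$ by flipping each bit independently with probability $1/n$, and replace $x$ by $y$ if $f(y)\ge f(x)$; the algorithm stops once the optimum is reached (the search point then stays at the optimum). The $O(1)$ term is a constant independent of $n$ and $t$. *)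

(* Defs.v *)
From HB Require Import structures.
From mathcomp Require Import all_boot all_order all_algebra.
From mathcomp Require Import all_classical all_reals all_analysis.
Set Implicit Arguments. Unset Strict Implicit. Unset Printing Implicit Defensive.
Import Order.TTheory GRing.Theory Num.Theory.
Local Open Scope ring_scope.

Definition bits (n : nat) := {ffun 'I_n -> bool}.

Definition LeadingOnes (n : nat) (x : bits n) : nat :=
  (\sum_(i < n) \prod_(j < n | (j <= i)%N) nat_of_bool (x j))%N.

Definition hamming (n : nat) (x y : bits n) : nat := #|[set i | x i != y i]|.

Section EA.
Variable R : realType.

(* probability that standard bit mutation (rate 1/n) turns x into y *)
Definition mutProb (n : nat) (x y : bits n) : R :=
  (n%:R^-1) ^+ hamming x y * (1 - n%:R^-1) ^+ (n - hamming x y).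

Definition ea_next (n : nat) (x y : bits n) : bits n :=
  if LeadingOnes x == n then x
  else if (LeadingOnes x <= LeadingOnes y)%N then y else x.

Definition ea_trans (n : nat) (x y : bits n) : R :=
  \sum_(z : bits n) mutProb x z * (ea_next x z == y)%:R.

Fixpoint ea_dist (n : nat) (t : nat) (y : bits n) : R :=
  match t with
  | O => (#|{: bits n}|%:R)^-1
  | t'.+1 => \sum_(x : bits n) @ea_dist n t' x * ea_trans x y
  end.

Definition EV (n t : nat) : R := \sum_(x : bits n) @ea_dist n t x * (LeadingOnes x)%:R.

End EA.

(* Main.v *)
Require Import Defs.
From HB Require Import structures.
From mathcomp Require Import all_boot all_order all_algebra.
From mathcomp Require Import all_classical all_reals all_analysis.
From mathcomp Require Import zify ring lra.
Import Order.TTheory GRing.Theory Num.Theory.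
Local Open Scope ring_scope.
Set Implicit Arguments. Unset Strict Implicit. Unset Printing Implicit Defensive.
Section LO.
Variable n : nat.
Implicit Types x y z : bits n.

Lemma cardlt (k : nat) : (k <= n)%N -> #|[pred i : 'I_n | (i < k)%N]| = k.
Proof.
move=> kn; rewrite -sum1_card.
have -> : (\sum_(i in [pred i : 'I_n | (i < k)%N]) 1 = \sum_(i < n | true && (i < k)%N) 1)%N.
  by apply: eq_bigl.
by rewrite (@big_ord_narrow_cond _ _ _ k n xpredT (fun=> 1%N) kn) /= sum1_card card_ord.
Qed.

Lemma LOE x : LeadingOnes x =
  (\sum_(i < n) [forall j : 'I_n, ((j <= i)%N ==> x j)])%N.
Proof.
apply: eq_bigr => i _.
case: forallP => H.
  by apply: big1 => j ji; rewrite (implyP (H j) ji).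
have [j Hj] : exists j : 'I_n, ~~ ((j <= i)%N ==> x j).
  by apply/existsP; rewrite -negb_forall; apply/forallP.
move: Hj; rewrite negb_imply => /andP [ji xj].
by rewrite (bigD1 j) //= (negbTE xj).
Qed.

Lemma LO_le x : (LeadingOnes x <= n)%N.
Proof.
rewrite LOE; apply: leq_trans (_ : \sum_(i < n) 1 <= n)%N.
  by apply: leq_sum => i _; case: forallP.
by rewrite sum1_card card_ord.
Qed.

Lemma LO_ge x (k : nat) : (k <= n)%N -> (forall j : 'I_n, (j < k)%N -> x j) ->
  (k <= LeadingOnes x)%N.
Proof.
move=> kn H; rewrite LOE (bigID (fun i : 'I_n => (i < k)%N)) /=.
apply: leq_trans (leq_addr _ _).
rewrite -[X in (X <= _)%N](cardlt kn) -sum1_card.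
rewrite leq_eqVlt; apply/orP; left; apply/eqP.
apply: eq_big => // i ik.
have -> // : [forall j : 'I_n, (j <= i)%N ==> x j].
apply/forallP => j; apply/implyP => ji; apply: H; exact: leq_ltn_trans ji ik.
Qed.

Lemma LO_lt x (j : 'I_n) : ~~ x j -> (LeadingOnes x <= j)%N.
Proof.
move=> xj; rewrite LOE (bigID (fun i : 'I_n => (i < j)%N)) /=.
rewrite [X in (_ + X)%N]big1 ?addn0; last first.
  move=> i; rewrite -leqNgt => ji.
  case: forallP => // H; by move: (implyP (H j) ji); rewrite (negbTE xj).
have jn : (j <= n)%N by apply: ltnW.
rewrite -[X in (_ <= X)%N](cardlt jn) -sum1_card.
apply: leq_sum => i _; by case: forallP.
Qed.

Lemma LO_true x (j : 'I_n) : (j < LeadingOnes x)%N -> x j.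
Proof. by move=> h; apply/negPn/negP => /LO_lt; rewrite leqNgt h. Qed.

Lemma LO_geE x (k : nat) : (k <= n)%N ->
  (k <= LeadingOnes x)%N = [forall j : 'I_n, (j < k)%N ==> x j].
Proof.
move=> kn; apply/idP/forallP.
  move=> h j; apply/implyP => jk; apply: LO_true; exact: leq_trans jk h.
by move=> H; apply: LO_ge => // j jk; exact: (implyP (H j) jk).
Qed.

End LO.
Section Flip.
Variable n : nat.
Implicit Types x y z : bits n.
Implicit Types m : {set 'I_n}.
Definition flip x (m : {set 'I_n}) : bits n := [ffun j => x j (+) (j \in m)].

Lemma flipK m : involutive (flip ^~ m).
Proof. by move=> x; apply/ffunP => j; rewrite !ffunE addbK. Qed.

Lemma flip_inj m : injective (flip ^~ m).
Proof. exact: inv_inj (@flipK m). Qed.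

Lemma LO_flip_ge x m k : (forall j, j \in m -> (k <= j)%N) ->
  (k <= LeadingOnes (flip x m))%N = (k <= LeadingOnes x)%N.
Proof.
move=> H; case: (leqP k n) => kn.
  rewrite !LO_geE //; apply: eq_forallb => j.
  case: (ltnP j k) => //= jk; rewrite ffunE.
  case: (boolP (j \in m)) => jm; last by rewrite addbF.
  by move: (H j jm); rewrite leqNgt jk.
have h1 := LO_le (flip x m); have h2 := LO_le x.
by rewrite leqNgt (leq_ltn_trans h1 kn) leqNgt (leq_ltn_trans h2 kn).
Qed.

Lemma LO_flip x m : (forall j, j \in m -> (LeadingOnes x < j)%N) ->
  LeadingOnes (flip x m) = LeadingOnes x.
Proof.
move=> H; apply/eqP; rewrite eqn_leq.
have := @LO_flip_ge x m (LeadingOnes x) (fun j jm => ltnW (H j jm)).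
rewrite leqnn => ->; rewrite andbT.
have := @LO_flip_ge x m (LeadingOnes x).+1 H.
by rewrite ltnn => h; rewrite leqNgt h.
Qed.

Lemma hamming_flip x z m : hamming (flip x m) (flip z m) = hamming x z.
Proof.
rewrite /hamming; apply: eq_card => j; rewrite !inE !ffunE.
by case: (x j); case: (z j); case: (j \in m).
Qed.

End Flip.
Section Prob.
Variable R : realType.
Variable n : nat.
Hypothesis Hn : (0 < n)%N.
Implicit Types x y z : bits n.
Local Notation LO := (@LeadingOnes n).

Definition pp : R := (n%:R)^-1.
Definition w (b c : bool) : R := if b == c then 1 - pp else pp.

Lemma pp_ge0 : 0 <= pp.
Proof. by rewrite /pp invr_ge0 ler0n. Qed.

Lemma pp_le1 : pp <= 1.
Proof. by rewrite /pp invf_le1 ?ler1n ?ltr0n. Qed.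

Lemma w_ge0 b c : 0 <= w b c.
Proof. rewrite /w; case: (b == c); [rewrite subr_ge0; exact: pp_le1 | exact: pp_ge0]. Qed.

Lemma sum_w a : \sum_(b : bool) w a b = 1.
Proof. rewrite big_bool /w; case: a => /=; lra. Qed.

Lemma w_pair a : w a true + w (~~ a) true = 1.
Proof. rewrite /w; case: a => /=; lra. Qed.

Lemma mutProbE x z : mutProb R x z = \prod_j w (x j) (z j).
Proof.
rewrite /mutProb (bigID (fun j => x j != z j)) /=.
have -> : \prod_(j | x j != z j) w (x j) (z j) = pp ^+ hamming x z.
  rewrite (eq_bigr (fun=> pp)); last by move=> j /negPf; rewrite /w => ->.
  by rewrite prodr_const /hamming cardsE.
have -> : \prod_(j | ~~ (x j != z j)) w (x j) (z j) = (1 - pp) ^+ (n - hamming x z).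
  rewrite (eq_bigr (fun=> 1 - pp)); last by move=> j /negPn; rewrite /w => ->.
  rewrite prodr_const /hamming cardsE; congr (_ ^+ _).
  have h := cardC [pred j : 'I_n | x j != z j]; rewrite card_ord in h.
  have e : #|(fun i => ~~ (x i != z i))| = #|[predC [pred j : 'I_n | x j != z j]]|.
    by apply: eq_card => j; rewrite !inE.
  have e2 : #|(fun i => x i != z i)| = #|[pred j : 'I_n | x j != z j]|.
    by apply: eq_card => j; rewrite !inE.
  have H : forall a b m : nat, (a + b)%N = m -> b = (m - a)%N by move=> *; lia.
  rewrite e e2; exact: H h.
by [].
Qed.

Lemma mut_ge0 x z : 0 <= mutProb R x z.
Proof. by rewrite mutProbE; apply: prodr_ge0 => j _; exact: w_ge0. Qed.

Lemma sum_mut_prod x (Q : 'I_n -> bool -> bool) :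
  \sum_(z : bits n) mutProb R x z * \prod_j (Q j (z j) : nat)%:R =
  \prod_j \sum_(b : bool) w (x j) b * (Q j b : nat)%:R.
Proof.
rewrite bigA_distr_bigA /=; apply: eq_bigr => z _.
by rewrite mutProbE big_split.
Qed.

Lemma sum_mut x : \sum_(z : bits n) mutProb R x z = 1.
Proof.
have := sum_mut_prod x (fun _ _ => true).
rewrite (eq_bigr (fun z => mutProb R x z)); last by move=> z _; rewrite big1 ?mulr1.
move=> ->; apply: big1 => j _.
by rewrite (eq_bigr (fun b => w (x j) b)) ?sum_w // => b _; rewrite mulr1.
Qed.

Lemma prod_nat_bool (b : 'I_n -> bool) :
  \prod_j ((b j : nat)%:R : R) = ([forall j, b j] : nat)%:R.
Proof.
case: forallP => H; first by apply: big1 => j _; rewrite H.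
have [j Hj] : exists j, ~~ b j by apply/existsP; rewrite -negb_forall; apply/forallP.
by rewrite (bigD1 j) //= (negbTE Hj) mul0r.
Qed.

Lemma ind_LO z (k : nat) : (k <= n)%N ->
  ((k <= LO z)%N : nat)%:R = \prod_(j : 'I_n) ((((j < k)%N ==> z j) : nat)%:R : R).
Proof. by move=> kn; rewrite prod_nat_bool LO_geE. Qed.

Lemma sum_pick (a : bits n) (G : bits n -> R) :
  \sum_(y : bits n) ((a == y) : nat)%:R * G y = G a.
Proof.
rewrite (bigD1 a) //= eqxx mul1r big1 ?addr0 // => y ya.
by rewrite eq_sym (negbTE ya) mul0r.
Qed.

Lemma trans_ge0 x y : 0 <= ea_trans R x y.
Proof. by apply: sumr_ge0 => z _; apply: mulr_ge0; [exact: mut_ge0 | exact: ler0n]. Qed.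

Lemma sum_trans_fun x (G : bits n -> R) :
  \sum_y ea_trans R x y * G y = \sum_z mutProb R x z * G (ea_next x z).
Proof.
rewrite /ea_trans; under eq_bigr do rewrite mulr_suml.
rewrite exchange_big /=; apply: eq_bigr => z _.
rewrite -(sum_pick (ea_next x z) G) mulr_sumr; apply: eq_bigr => y _.
by rewrite mulrA.
Qed.

Lemma sum_trans x : \sum_y ea_trans R x y = 1.
Proof.
have := sum_trans_fun x (fun=> 1); rewrite (eq_bigr (fun y => ea_trans R x y)).
  by move=> ->; rewrite (eq_bigr (fun z => mutProb R x z)) ?sum_mut // => z _; rewrite mulr1.
by move=> y _; rewrite mulr1.
Qed.

Lemma dist_ge0 t x : 0 <= ea_dist R t x.
Proof.
elim: t x => [|t IH] x /=; first by rewrite invr_ge0 ler0n.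
by apply: sumr_ge0 => y _; apply: mulr_ge0; [exact: IH | exact: trans_ge0].
Qed.

Lemma sum_dist t : \sum_(x : bits n) ea_dist R t x = 1.
Proof.
elim: t => [|t IH] /=.
  rewrite sumr_const -[_ *+ _]mulr_natl mulfV // pnatr_eq0 -lt0n.
  by rewrite card_ffun card_bool card_ord expn_gt0.
rewrite exchange_big /= -[RHS]IH; apply: eq_bigr => x _.
by rewrite -mulr_sumr sum_trans mulr1.
Qed.

Lemma EV_step t : EV R n t.+1 =
  \sum_x ea_dist R t x * \sum_z mutProb R x z * (LO (ea_next x z))%:R.
Proof.
rewrite /EV.
have E : forall y : bits n, ea_dist R t.+1 y = \sum_(x : bits n) ea_dist R t x * ea_trans R x y by [].
under eq_bigr do rewrite E mulr_suml.
rewrite exchange_big /=; apply: eq_bigr => x _.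
by rewrite -(sum_trans_fun x (fun y => (LO y)%:R)) mulr_sumr; apply: eq_bigr => y _; rewrite mulrA.
Qed.

End Prob.
Section Inv.
Variable R : realType.
Variable n : nat.
Implicit Types x y z : bits n.
Implicit Types m : {set 'I_n}.
Local Notation LO := (@LeadingOnes n).

Lemma LO_next x z : (LO x <= LO (ea_next x z))%N.
Proof. by rewrite /ea_next; case: ifP => _ //; case: ifP. Qed.

Lemma LO_next_gain x z :
  (LO x + ((LO x).+1 <= LO z)%N + ((LO x).+2 <= LO z)%N <= LO (ea_next x z))%N.
Proof.
have hz := LO_le z; rewrite /ea_next.
case: ifP => [/eqP e|_].
  rewrite e; case: (leqP n.+1 (LO z)) => h1; case: (leqP n.+2 (LO z)) => h2 /=; lia.
case: ifP => h0;
  case: (leqP (LO x).+1 (LO z)) => h1; case: (leqP (LO x).+2 (LO z)) => h2 /=; lia.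
Qed.

Lemma trans_zero x y : (LO y < LO x)%N -> ea_trans R x y = 0.
Proof.
move=> h; rewrite /ea_trans big1 // => z _.
case: (eqVneq (ea_next x z) y) => [e|ne]; last by rewrite mulr0.
have := LO_next x z; rewrite e; lia.
Qed.

Lemma next_flip x z m : (forall j, j \in m -> (LO x < j)%N) ->
  ea_next (flip x m) (flip z m) = flip (ea_next x z) m.
Proof.
move=> H; rewrite /ea_next (LO_flip H).
have H' : forall j, j \in m -> (LO x <= j)%N by move=> j /H /ltnW.
rewrite (LO_flip_ge z H').
by case: ifP => _ //; case: ifP.
Qed.

Lemma trans_flip x y m : (forall j, j \in m -> (LO x < j)%N) ->
  ea_trans R (flip x m) (flip y m) = ea_trans R x y.
Proof.
move=> H; rewrite /ea_trans (reindex_inj (@flip_inj n m)) /=.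
apply: eq_bigr => z _.
by rewrite /mutProb hamming_flip (next_flip z H) (inj_eq (@flip_inj n m)).
Qed.

Lemma dist_flip t x m : (forall j, j \in m -> (LO x < j)%N) ->
  ea_dist R t (flip x m) = ea_dist R t x.
Proof.
elim: t x => [|t IH] y H; first by [].
have E : forall y' : bits n, ea_dist R t.+1 y' =
  \sum_(x : bits n) ea_dist R t x * ea_trans R x y' by [].
rewrite !E (reindex_inj (@flip_inj n m)) /=.
apply: eq_bigr => x _.
case: (leqP (LO x) (LO y)) => h.
  have Hx : forall j, j \in m -> (LO x < j)%N.
    by move=> j /H; apply: leq_ltn_trans h.
  by rewrite (IH x Hx) (trans_flip y Hx).
rewrite (trans_zero h) (trans_zero (x := flip x m)) ?mulr0 //.
rewrite (LO_flip H).
have H' : forall j, j \in m -> ((LO y).+1 <= j)%N by [].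
by rewrite (LO_flip_ge x H').
Qed.

End Inv.
Section Drift.
Variable R : realType.
Variable n : nat.
Hypothesis Hn : (0 < n)%N.
Implicit Types x y z : bits n.
Local Notation LO := (@LeadingOnes n).
Local Notation p := (pp R n).
Local Notation w := (@w R n).

Lemma wTT : w true true = 1 - p. Proof. by []. Qed.
Lemma wTF : w true false = p. Proof. by []. Qed.
Lemma wFT : w false true = p. Proof. by []. Qed.
Lemma wFF : w false false = 1 - p. Proof. by []. Qed.

Definition Pk x (k : nat) : R := \sum_z mutProb R x z * ((k <= LO z)%N : nat)%:R.

Lemma Pk_prod x k : (k <= n)%N -> Pk x k =
  \prod_(j : 'I_n) \sum_(b : bool) w (x j) b * (((j < k)%N ==> b) : nat)%:R.
Proof.
move=> kn; rewrite /Pk; under eq_bigr do rewrite (ind_LO R _ kn).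
exact: sum_mut_prod.
Qed.

Lemma Pk_big x k : (n < k)%N -> Pk x k = 0.
Proof.
move=> h; rewrite /Pk big1 // => z _.
have := LO_le z => hz.
have -> : (k <= LO z)%N = false by apply/negbTE; rewrite -ltnNge; exact: leq_ltn_trans hz h.
by rewrite mulr0.
Qed.

Lemma Pk_ge0 x k : 0 <= Pk x k.
Proof. by apply: sumr_ge0 => z _; apply: mulr_ge0; [exact: mut_ge0 | exact: ler0n]. Qed.

Lemma LO_false x (j : 'I_n) : j = LO x :> nat -> ~~ x j.
Proof.
move=> e; apply/negP => xj.
have : ((LO x).+1 <= LO x)%N.
  apply: LO_ge; first by rewrite -e.
  move=> i; rewrite ltnS leq_eqVlt => /orP [/eqP ei|il].
    by have -> : i = j by apply: val_inj; rewrite /= ei e.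
  exact: LO_true.
by rewrite ltnn.
Qed.

Lemma Pk_first x : (LO x < n)%N -> Pk x (LO x).+1 = (1 - p) ^+ (LO x) * p.
Proof.
move=> ln; rewrite Pk_prod //.
set i := LO x.
pose j0 : 'I_n := Ordinal ln.
rewrite (eq_bigr (fun j : 'I_n => (if (j < i)%N then 1 - p else 1) * (if j == j0 then p else 1))); last first.
  move=> j _; rewrite big_bool /=.
  case: (ltngtP j i) => h.
  - have xj : x j by apply: LO_true.
    have -> : (j == j0) = false by apply/negbTE; apply/eqP => e; move: h; rewrite e /= ltnn.
    rewrite xj ltnS (ltnW h) /= ?wTT ?wTF ?mulr1n ?mulr0n; lra.
  - have -> : (j == j0) = false by apply/negbTE; apply/eqP => e; move: h; rewrite e /= ltnn.
    rewrite (ltnNge j i.+1) h /= ?mulr1n ?mulr1; have := sum_w R n (x j); rewrite big_bool /= => ->; lra.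
  - have xj : ~~ x j by apply: LO_false.
    have -> : j == j0 by apply/eqP; apply: val_inj.
    rewrite h ?ltnn ltnSn /= (negbTE xj) ?wFT ?wFF ?mulr1n ?mulr0n; lra.
rewrite big_split /=; congr (_ * _).
  rewrite -big_mkcond prodr_const.
  have -> : #|[pred j : 'I_n | (j < i)%N]| = i by apply: cardlt; exact: ltnW.
  by [].
by rewrite -big_mkcond big_pred1_eq.
Qed.

Definition sig x : bits n := flip x [set j : 'I_n | (j : nat) == (LO x).+1].

Lemma sig_supp x : forall j, j \in [set j : 'I_n | (j : nat) == (LO x).+1] -> (LO x < j)%N.
Proof. by move=> j; rewrite inE => /eqP ->. Qed.

Lemma LO_sig x : LO (sig x) = LO x.
Proof. exact: LO_flip (@sig_supp x). Qed.

Lemma sigK : involutive sig.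
Proof. by move=> x; rewrite {1}/sig LO_sig flipK. Qed.

Lemma dist_sig t x : ea_dist R t (sig x) = ea_dist R t x.
Proof. exact: dist_flip (@sig_supp x). Qed.

Lemma pair x : ((LO x).+2 <= n)%N ->
  Pk x (LO x).+2 + Pk (sig x) (LO x).+2 = Pk x (LO x).+1.
Proof.
move=> h; have h1 : ((LO x).+1 <= n)%N by exact: ltnW.
rewrite !Pk_prod //.
set i := LO x.
pose j0 : 'I_n := Ordinal h.
have sj0 : sig x j0 = ~~ x j0 by rewrite /sig ffunE inE eqxx addbT.
have sj : forall j, j != j0 -> sig x j = x j.
  move=> j jn; rewrite /sig ffunE inE.
  have -> : ((j : nat) == i.+1) = false.
    by apply/negbTE; apply: contra jn => /eqP e; apply/eqP; apply: val_inj.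
  by rewrite addbF.
have ee : forall j : 'I_n, j != j0 -> (j < i.+2)%N = (j < i.+1)%N.
  move=> j jn; rewrite ltnS leq_eqVlt.
  have -> : ((j : nat) == i.+1) = false.
    by apply/negbTE; apply: contra jn => /eqP e; apply/eqP; apply: val_inj.
  by [].
rewrite [X in X + _ = _](bigD1 j0) // [X in _ + X = _](bigD1 j0) // [RHS](bigD1 j0) //=.
have f1 : forall a : bool, \sum_(b : bool) w a b * (((j0 < i.+2)%N ==> b) : nat)%:R = w a true.
  move=> a; rewrite big_bool /= ltnSn /= ?mulr1n ?mulr0n; lra.
have f3 : \sum_(b : bool) w (x j0) b * (((j0 < i.+1)%N ==> b) : nat)%:R = 1.
  rewrite big_bool /= ltnn /= ?mulr1n !mulr1; have := sum_w R n (x j0); by rewrite big_bool.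
rewrite !f1 f3 sj0.
have -> : \prod_(j < n | j != j0) \sum_(b : bool) w (sig x j) b * (((j < i.+2)%N ==> b) : nat)%:R
  = \prod_(j < n | j != j0) \sum_(b : bool) w (x j) b * (((j < i.+1)%N ==> b) : nat)%:R.
  by apply: eq_bigr => j jn; rewrite sj // ee.
have -> : \prod_(j < n | j != j0) \sum_(b : bool) w (x j) b * (((j < i.+2)%N ==> b) : nat)%:R
  = \prod_(j < n | j != j0) \sum_(b : bool) w (x j) b * (((j < i.+1)%N ==> b) : nat)%:R.
  by apply: eq_bigr => j jn; rewrite ee.
by rewrite -mulrDl w_pair mul1r.
Qed.

End Drift.
Section Numeric.
Variable R : realType.

Lemma bern (a : R) k : a <= 1 -> 1 - k%:R * a <= (1 - a) ^+ k.
Proof.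
move=> a1; have h0 : 0 <= 1 - a by rewrite subr_ge0.
elim: k => [|k IH]; first by rewrite mul0r subr0 expr0.
rewrite exprS.
apply: le_trans (_ : (1 - a) * (1 - k%:R * a) <= _); last exact: ler_wpM2l.
have := mulr_ge0 (ler0n R k) (sqr_ge0 a).
rewrite -[k.+1]addn1 natrD; nra.
Qed.

Lemma pow_le (x y : R) k : 0 <= x -> x <= y -> x ^+ k <= y ^+ k.
Proof.
move=> x0 xy; apply: lerXn2r; rewrite ?nnegrE //; exact: le_trans xy.
Qed.

Lemma expRm1_ge : 1 / 4 <= expR (-1) :> R.
Proof.
have -> : expR (-1) = expR (- (1/2)) ^+ 2 :> R.
  by rewrite -expRM_natl; congr expR; field.
have h : 1 / 2 <= expR (- (1/2)) :> R.
  apply: le_trans (expR_ge1Dx _); lra.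
have -> : 1 / 4 = (1 / 2) ^+ 2 :> R by field.
apply: pow_le => //; lra.
Qed.

Lemma e_ge : 7 / 3 <= expR 1 :> R.
Proof.
have -> : expR 1 = expR (1/4) ^+ 4 :> R.
  by rewrite -expRM_natl; congr expR; field.
have h : 5 / 4 <= expR (1/4) :> R.
  apply: le_trans (expR_ge1Dx _); lra.
apply: le_trans (_ : (5/4) ^+ 4 <= _); last by apply: pow_le => //; lra.
rewrite !exprS expr0; lra.
Qed.

Lemma pow_bound m : (1 <= m)%N -> 1 / 4 <= (1 - (m.+1%:R)^-1) ^+ m :> R.
Proof.
move=> m1.
have mp : 0 < m%:R :> R by rewrite ltr0n.
have h1 : expR (- (m%:R^-1)) <= 1 - (m.+1%:R)^-1 :> R.
  rewrite expRN.
  have e1 : 1 - (m.+1%:R)^-1 = (1 + m%:R^-1)^-1 :> R.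
    rewrite -addn1 natrD; field; apply/andP; split; lra.
  rewrite e1 lef_pV2 ?posrE ?expR_gt0 //; first exact: expR_ge1Dx.
have h3 : expR (- (m%:R^-1)) ^+ m = expR (-1) :> R.
  by rewrite -expRM_natr; congr expR; field; lra.
apply: le_trans expRm1_ge _; rewrite -h3.
apply: pow_le => //; exact: ltW (expR_gt0 _).
Qed.

Lemma cvx (l u : R) : 0 <= l -> l <= 1 -> expR (l * u) <= l * expR u + (1 - l).
Proof.
move=> l0 l1; set z := l * u.
have tang : forall y, expR z * (1 + (y - z)) <= expR y.
  move=> y; have -> : expR y = expR z * expR (y - z) by rewrite -expRD; congr expR; ring.
  apply: ler_wpM2l; [exact: ltW (expR_gt0 _) | exact: expR_ge1Dx].
have t1 := ler_wpM2l l0 (tang u).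
have l0' : 0 <= 1 - l by lra.
have t2 := ler_wpM2l l0' (tang 0).
rewrite expR0 in t2.
have key : l * (expR z * (1 + (u - z))) + (1 - l) * (expR z * (1 + (0 - z))) = expR z.
  rewrite /z; ring.
rewrite -{1}key; apply: lerD => //; by rewrite mulr1 in t2.
Qed.

Lemma final_exp (tau : R) : 0 <= tau -> tau <= (expR 1 - 1) / 2 ->
  expR (- (3/2) * tau) <= 1 - 2 * tau / expR 1.
Proof.
move=> t0 t1.
have E := e_ge.
set e := expR 1 in t1 E *.
have ep : 0 < e by lra.
set t1' := (e - 1) / 2.
have t1p : 0 < t1' by rewrite /t1'; lra.
set l := tau / t1'.
have l0 : 0 <= l by rewrite /l divr_ge0 //; exact: ltW.
have l1 : l <= 1 by rewrite /l ler_pdivrMr // mul1r.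
have -> : - (3/2) * tau = l * (- (3/2) * t1') by rewrite /l; field; lra.
apply: le_trans (cvx _ l0 l1) _.
have hu : expR (- (3/2) * t1') <= e^-1.
  rewrite /e -expRN ler_expR /t1'; lra.
have := ler_wpM2l l0 hu => h.
have key : 1 - l * (1 - e^-1) = 1 - 2 * tau / e.
  rewrite /l /t1'; field; apply/andP; split; lra.
lra.
Qed.

End Numeric.
Section Main.
Variable R : realType.
Variable n : nat.
Hypothesis Hn : (6 <= n)%N.
Implicit Types x y z : bits n.
Local Notation LO := (@LeadingOnes n).
Local Notation p := (pp R n).
Local Notation d t := (@ea_dist R n t).

Lemma Hn0 : (0 < n)%N. Proof. by apply: leq_trans Hn. Qed.

Lemma EV_ge0 t : 0 <= EV R n t.
Proof. by apply: sumr_ge0 => x _; apply: mulr_ge0; [exact: (dist_ge0 R Hn0) | exact: ler0n]. Qed.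

Lemma drift t : EV R n t + \sum_x d t x * (Pk R x (LO x).+1 + Pk R x (LO x).+2) <= EV R n t.+1.
Proof.
rewrite (EV_step R) /EV -big_split /=.
apply: ler_sum => x _; rewrite -mulrDr.
apply: ler_wpM2l; first exact: (dist_ge0 R Hn0).
have -> : (LO x)%:R = \sum_z mutProb R x z * (LO x)%:R :> R by rewrite -mulr_suml (sum_mut R Hn0) mul1r.
rewrite /Pk -!big_split /=; apply: ler_sum => z _; rewrite -!mulrDr.
apply: ler_wpM2l; first exact: (mut_ge0 R Hn0).
by rewrite -!natrD ler_nat addnA; exact: LO_next_gain.
Qed.

Lemma pair_sum t : \sum_x d t x * Pk R x (LO x).+2 =
  2^-1 * \sum_x d t x * ((((LO x).+2 <= n)%N : nat)%:R * Pk R x (LO x).+1).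
Proof.
set S := LHS.
have S2 : S = \sum_x d t x * Pk R (sig x) (LO x).+2.
  rewrite /S (reindex_inj (can_inj (@sigK n))) /=; apply: eq_bigr => x _.
  by rewrite dist_sig LO_sig.
have : S + S = \sum_x d t x * ((((LO x).+2 <= n)%N : nat)%:R * Pk R x (LO x).+1).
  rewrite {2}S2 /S -big_split /=; apply: eq_bigr => x _; rewrite -mulrDr; congr (_ * _).
  case: (leqP (LO x).+2 n) => h.
    by rewrite /= mul1r; exact: (pair R Hn0).
  by rewrite (Pk_big R x h) (Pk_big R (sig x) h) /= ?mulr0n ?mul0r addr0.
move=> <-; by field.
Qed.

Lemma p_pos : 0 < p.
Proof. by rewrite /pp invr_gt0 ltr0n Hn0. Qed.

Lemma p_small : p <= 6^-1.
Proof.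
rewrite /pp lef_pV2 ?posrE ?ltr0n ?Hn0 //.
by rewrite (ler_nat R 6 n).
Qed.

Lemma pn : p * n%:R = 1.
Proof. by rewrite /pp mulVf // pnatr_eq0 -lt0n Hn0. Qed.

Lemma gamma x : 3/2 * p^+2 * (n%:R - (LO x)%:R) <=
  Pk R x (LO x).+1 + 2^-1 * ((((LO x).+2 <= n)%N : nat)%:R * Pk R x (LO x).+1).
Proof.
have hp := p_pos; have hs := p_small; have hpn := pn.
case: (ltngtP (LO x) n) => h.
- rewrite (Pk_first R Hn0) //.
  set i := LO x in h *.
  have q0 : 0 <= (1 - p) ^+ i by apply: exprn_ge0; lra.
  case: (leqP i.+2 n) => h2 /=.
    have p1 : p <= 1 by lra.
    have b := @bern R p i p1.
    have hb : p * (n%:R - i%:R) <= (1 - p) ^+ i.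
      apply: le_trans b; rewrite mulrBr hpn; lra.
    have := ler_wpM2l (ltW hp) hb; rewrite mulr1n; nra.
  have ei : n = i.+1 by clear -h h2; lia.
  have hm : (1 <= i)%N by move: Hn; rewrite ei; case: i {h h2 ei q0} => //.
  have pb := pow_bound R hm.
  have e1 : p = (i.+1%:R)^-1 by rewrite /pp ei.
  rewrite -e1 in pb.
  have -> : n%:R - i%:R = 1 :> R by rewrite ei -addn1 natrD; ring.
  rewrite ?mulr0n ?mul0r ?mulr0 ?addr0 ?mulr1.
  nra.
- move: (LO_le x); rewrite leqNgt h //.
- rewrite h (Pk_big R x (ltnSn n)) subrr ?mulr0 ?mulr0n ?mul0r ?addr0; exact: lexx.
Qed.

Lemma step t : EV R n t + 3/2 * p^+2 * (n%:R - EV R n t) <= EV R n t.+1.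
Proof.
apply: le_trans (drift t).
rewrite lerD2l.
have -> : \sum_x d t x * (Pk R x (LO x).+1 + Pk R x (LO x).+2) =
  \sum_x d t x * (Pk R x (LO x).+1 + 2^-1 * ((((LO x).+2 <= n)%N : nat)%:R * Pk R x (LO x).+1)).
  under eq_bigr do rewrite mulrDr.
  rewrite big_split /= pair_sum mulr_sumr -big_split /=.
  apply: eq_bigr => x _; rewrite mulrDr; congr (_ + _); ring.
have -> : 3/2 * p^+2 * (n%:R - EV R n t) =
  \sum_x d t x * (3/2 * p^+2 * (n%:R - (LO x)%:R)).
  have -> : \sum_x d t x * (3/2 * p^+2 * (n%:R - (LO x)%:R)) =
     \sum_x (3/2 * p^+2 * n%:R * d t x - 3/2 * p^+2 * (d t x * (LO x)%:R)).
    by apply: eq_bigr => x _; ring.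
  by rewrite sumrB -!mulr_sumr (sum_dist R Hn0) /EV; ring.
apply: ler_sum => x _; apply: ler_wpM2l; first exact: (dist_ge0 R Hn0).
exact: gamma.
Qed.

Lemma gap t : n%:R - EV R n t <= (1 - 3/2 * p^+2) ^+ t * n%:R.
Proof.
have hp := p_pos; have hs := p_small.
have a0 : 0 <= 1 - 3/2 * p^+2 by nra.
elim: t => [|t IH].
  by rewrite expr0 mul1r; have := EV_ge0 0; lra.
have := step t => h.
apply: le_trans (_ : (1 - 3/2 * p^+2) * (n%:R - EV R n t) <= _).
  lra.
have -> : (1 - 3/2 * p^+2) ^+ t.+1 * n%:R = (1 - 3/2 * p^+2) * ((1 - 3/2 * p^+2) ^+ t * n%:R).
  by rewrite exprS; ring.
exact: (ler_wpM2l a0 IH).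
Qed.

Lemma main_large t : (t%:R : R) <= (expR 1 - 1) / 2 * n%:R ^+ 2 ->
  (2 * t%:R : R) / (expR 1 * n%:R) <= EV R n t.
Proof.
move=> ht.
have hp := p_pos; have hs := p_small; have hpn := pn.
have np : 0 < n%:R :> R by rewrite ltr0n Hn0.
have a0 : 0 <= 1 - 3/2 * p^+2 by nra.
set tau := t%:R * p^+2.
have tau0 : 0 <= tau by rewrite /tau mulr_ge0 // ?ler0n // sqr_ge0.
have tau1 : tau <= (expR 1 - 1) / 2.
  rewrite /tau; have := ler_wpM2r (sqr_ge0 p) ht.
  have -> : (expR 1 - 1) / 2 * n%:R ^+ 2 * p ^+ 2 = (expR 1 - 1) / 2.
    have nz : n%:R != 0 :> R by rewrite pnatr_eq0 -lt0n Hn0.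
    by rewrite /pp; field.
  by [].
have fe := final_exp tau0 tau1.
have ha : (1 - 3/2 * p^+2) ^+ t <= expR (- (3/2) * tau).
  have -> : - (3/2) * tau = (- (3/2 * p^+2)) * t%:R by rewrite /tau; ring.
  rewrite expRM_natr; apply: pow_le => //.
  by apply: le_trans (expR_ge1Dx _); lra.
have g := gap t.
have e0 : 0 < expR 1 :> R := expR_gt0 1.
have key : (2 * t%:R : R) / (expR 1 * n%:R) = n%:R * (2 * tau / expR 1).
  rewrite /tau.
  have -> : p = n%:R^-1 by [].
  field; apply/andP; split; lra.
rewrite key.
have : n%:R * (2 * tau / expR 1) <= n%:R * (1 - expR (- (3/2) * tau)).
  apply: ler_wpM2l; [exact: ltW | lra].
have := ler_wpM2r (ltW np) ha.
lra.
Qed.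

End Main.

Lemma small_case (R : realType) (n t : nat) : (1 <= n)%N -> (n < 6)%N ->
  (t%:R : R) <= (expR 1 - 1) / 2 * n%:R ^+ 2 ->
  (2 * t%:R : R) / (expR 1 * n%:R) - 6 <= EV R n t.
Proof.
move=> n1 n6 ht.
have e0 : 0 < expR 1 :> R := expR_gt0 1.
have np : 0 < n%:R :> R by rewrite ltr0n.
have n5 : n%:R <= 6 :> R by rewrite (ler_nat R n 6) ltnW.
have hev : 0 <= EV R n t.
  by apply: sumr_ge0 => x _; apply: mulr_ge0; [exact: (dist_ge0 R n1) | exact: ler0n].
have : (2 * t%:R : R) / (expR 1 * n%:R) <= n%:R.
  rewrite ler_pdivrMr; last exact: mulr_gt0.
  have h2 : n%:R ^+ 2 = n%:R * n%:R :> R by rewrite expr2.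
  rewrite h2 in ht; have := mulr_gt0 np np; nra.
lra.
Qed.
Theorem theorem11 (R : realType) :
  exists C : R, forall n t : nat, (1 <= n)%N ->
    (t%:R : R) <= (expR 1 - 1) / 2 * n%:R ^+ 2 - n%:R * Num.sqrt (n%:R) * ln (n%:R) ->
    (2 * t%:R : R) / (expR 1 * n%:R) - C <= EV R n t.
Proof.
exists 6 => n t n1 ht.
have hs : 0 <= n%:R * Num.sqrt (n%:R) * ln (n%:R) :> R.
  apply: mulr_ge0; first by apply: mulr_ge0; [exact: ler0n | exact: sqrtr_ge0].
  by apply: ln_ge0; rewrite ler1n.
have ht' : (t%:R : R) <= (expR 1 - 1) / 2 * n%:R ^+ 2 by lra.
case: (ltnP n 6) => h.
  exact: small_case.
have := @main_large R n h t ht'.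
lra.
Qed.
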